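(* Let $c$ be a nontrivial prismatic 5-circuit in a compact right-angled hyperbolic polyhedron $P$, crossing edges $e_1,\dots,e_5$ and faces $F_1,\dots,F_5$ (indices mod 5). Then there is no $i$ such that $F_i$ and $F_{i+1}$ both contain a flat of $c$ lying on the same side of $c$.
   Context: A compact right-angled hyperbolic polyhedron is a nonempty compact convex intersection of finitely many closed half-spaces of $\mathbb{H}^3$ all of whose dihedral angles equal $\pi/2$. It has trivalent 1-skeleton and no prismatic 3- or 4-circuits, and every face has at least 5 edges. A $k$-circuit is a simple closed curve on $\partial P$ meeting the 1-skeleton transversely, in interior points of exactly $k$ distinct edges; it is prismatic if the $2k$ endpoints of these edges are pairwise distinct. For a prismatic 5-circuit $c$ crossing edges $e_1,\dots,e_5$ in cyclic order, $F_i$ denotes the face containing both $e_i$ and $e_{i+1}$. The circuit $c$ is trivial if there is a pentagonal face such that each $e_i$ has exactly one endpoint on it, and nontrivial otherwise. An edge $d$ of some $F_i$ is a flat of $c$ if, on one side of $c$, the part of $F_i$ cut off by the arc $c\cap F_i$ is a combinatorial quadrilateral whose side opposite to that arc is $d$. The flat then lies on that side of $c$. *)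

(* Defs.v *)
(* Combinatorial model of the boundary of a compact
   right-angled hyperbolic polyhedron as a (planar, cubic, polyhedral)
   combinatorial map on a finite set of darts D:
     a : D -> D   edge involution (a x is the other half of the edge of x),
     s : D -> D   vertex rotation (s permutes the 3 darts at a vertex),
     phi := s \o a  face permutation (orbits = faces). *)
From mathcomp Require Import all_boot.
Set Implicit Arguments.
Unset Strict Implicit.
Unset Printing Implicit Defensive.

Section CMap.
Variables (D : finType) (a s : D -> D).

Definition phi (x : D) : D := s (a x).

Definition vertex_of (x : D) : {set D} := [set y | fconnect s x y].
Definition edge_of (x : D) : {set D} := [set x; a x].
Definition face_of (x : D) : {set D} := [set y | fconnect phi x y].

Definition is_edge (E : {set D}) : Prop := exists x, E = edge_of x.
Definition is_face (G : {set D}) : Prop := exists x, G = face_of x.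

Definition edge_on_face (E G : {set D}) : bool := E :&: G != set0.
Definition vertex_on_face (x : D) (G : {set D}) : bool := vertex_of x :&: G != set0.

Definition nV : nat := #|[set vertex_of x | x : D]|.
Definition nE : nat := #|[set edge_of x | x : D]|.
Definition nF : nat := #|[set face_of x | x : D]|.

Definition circuit (k : nat) (e F : 'I_k -> {set D}) : Prop :=
  [/\ forall i, is_edge (e i),
      forall i, is_face (F i),
      injective e,
      injective F &
      forall i, edge_on_face (e i) (F i) /\ edge_on_face (e (ordS i)) (F i)].

(* prismatic: the 2k endpoints of the crossed edges are pairwise distinct,
   i.e. distinct darts of the crossed edges sit at distinct vertices *)
Definition prismatic (k : nat) (e F : 'I_k -> {set D}) : Prop :=
  circuit e F /\
  forall (i j : 'I_k) (x y : D), x \in e i -> y \in e j -> fconnect s x y -> x = y.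

Definition trivial_circuit (k : nat) (e : 'I_k -> {set D}) : Prop :=
  exists G : {set D}, [/\ is_face G, #|G| = 5 &
    forall i, #|[set x in e i | vertex_on_face x G]| = 1].

(* d is a flat of the circuit in the face F i: d is an edge of F i, and the
   part of F i cut off by the arc (on one side) is a quadrilateral whose side
   opposite to the arc is d, i.e. d joins an endpoint of e i to an endpoint
   of e (i+1) *)
Definition flat (k : nat) (e F : 'I_k -> {set D}) (i : 'I_k) (d : {set D}) : Prop :=
  [/\ is_edge d, edge_on_face d (F i), d != e i, d != e (ordS i) &
      exists x y z, [/\ d = edge_of x, y \in e i, z \in e (ordS i),
                        fconnect s x y & fconnect s (a x) z]].

(* moves in the 1-skeleton that do not cross the circuit: turning around a
   vertex, or traversing an edge that is not crossed *)
Definition off_circuit (k : nat) (e : 'I_k -> {set D}) : rel D :=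
  fun x y => (y == s x) || ((y == a x) && [forall j, x \notin e j]).

(* two edges (not crossed by the circuit) lie on the same side of it:
   they are joined by a path of the 1-skeleton not crossing the circuit *)
Definition same_side (k : nat) (e : 'I_k -> {set D}) (d d' : {set D}) : Prop :=
  exists x y, [/\ x \in d, y \in d' & connect (off_circuit e) x y].

(* combinatorial type of a compact right-angled hyperbolic polyhedron:
   a connected planar (Euler characteristic 2) trivalent polyhedral map
   (faces are simple cycles, each edge lies on two distinct faces, two faces
   share at most one edge), with no prismatic 3- or 4-circuits and all faces
   with at least 5 edges (Pogorelov / Andreev). *)
Record rah_polyhedron : Prop := {
  rah_a_inv : forall x, a (a x) = x;
  rah_a_fpf : forall x, a x != x;
  rah_s_cube : forall x, s (s (s x)) = x;
  rah_s_fpf : forall x, s x != x;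
  rah_conn : forall x y, connect (fun u v => (v == a u) || (v == s u)) x y;
  rah_euler : nV + nF = nE + 2;
  rah_face_simple : forall x y, y \in face_of x -> y \in vertex_of x -> x = y;
  rah_edge_two_faces : forall x, a x \notin face_of x;
  rah_faces_meet : forall x y, y \in face_of x -> a y \in face_of (a x) -> x = y;
  rah_face5 : forall x, 5 <= #|face_of x|;
  rah_no_prism3 : forall e F : 'I_3 -> {set D}, ~ prismatic e F;
  rah_no_prism4 : forall e F : 'I_4 -> {set D}, ~ prismatic e F
}.

End CMap.

(* Main.v *)
Require Import Defs.
From mathcomp Require Import all_boot all_algebra.
Set Implicit Arguments.
Unset Strict Implicit.
Unset Printing Implicit Defensive.
Import GRing.Theory.

Lemma connect_inv (T : finType) (e : rel T) (U : Type) (g : T -> U) :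
  (forall u v, e u v -> g u = g v) -> forall x y, connect e x y -> g x = g y.
Proof.
move=> H x y /connectP [q Hq ->]; elim: q x Hq => //= z q IH x /andP [exz Hq].
by rewrite (H _ _ exz); exact: IH.
Qed.

Section Orb.
Variables (D : finType) (a p : D -> D).
Hypothesis aK : involutive a.
Hypothesis pinj : injective p.

Definition orb x : {set D} := [set y | fconnect p x y].
Definition OS : {set {set D}} := [set orb x | x : D].
Definition ES : {set {set D}} := [set [set x; a x] | x : D].

Lemma orb_eqP x y : orb x = orb y <-> fconnect p x y.
Proof.
split=> [E|H].
  have: y \in orb y by rewrite inE connect0.
  by rewrite -E inE.
apply/setP=> z; rewrite !inE.
exact: (same_connect (fconnect_sym pinj) H).
Qed.

Lemma memOS x : orb x \in OS.
Proof. by apply/imsetP; exists x. Qed.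
Lemma memES x : [set x; a x] \in ES.
Proof. by apply/imsetP; exists x. Qed.

Definition vid x : 'I_#|OS| := enum_rank_in (memOS x) (orb x).
Definition eid x : 'I_#|ES| := enum_rank_in (memES x) [set x; a x].

Lemma vidK x : enum_val (vid x) = orb x.
Proof. exact: (enum_rankK_in (memOS x) (memOS x)). Qed.
Lemma eidK x : enum_val (eid x) = [set x; a x].
Proof. exact: (enum_rankK_in (memES x) (memES x)). Qed.

Lemma vid_eq x y : (vid x == vid y) = fconnect p x y.
Proof.
apply/eqP/idP => [E|H].
  by apply/orb_eqP; rewrite -!vidK E.
by apply: enum_val_inj; rewrite !vidK; apply/orb_eqP.
Qed.

Lemma vid_surj (i : 'I_#|OS|) : exists x, i = vid x.
Proof.
have := enum_valP i; case/imsetP => x _ E; exists x.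
by apply: enum_val_inj; rewrite vidK.
Qed.

Lemma eid_surj (j : 'I_#|ES|) : exists x, j = eid x.
Proof.
have := enum_valP j; case/imsetP => x _ E; exists x.
by apply: enum_val_inj; rewrite eidK.
Qed.

Definition incM : 'M['F_2]_(#|OS|, #|ES|) :=
  \matrix_(i, j) ((enum_val j :&: enum_val i != set0)%:R)%R.

Lemma incM_E y x :
  incM (vid y) (eid x) = ((fconnect p y x) || (fconnect p y (a x)))%:R%R.
Proof.
rewrite mxE vidK eidK; congr ((nat_of_bool _)%:R)%R.
apply/idP/idP => [/set0Pn [z]|/orP [H|H]].
- by rewrite !inE => /andP [/orP [] /eqP -> ] ->; rewrite ?orbT.
- by apply/set0Pn; exists x; rewrite !inE eqxx.
by apply/set0Pn; exists (a x); rewrite !inE eqxx orbT.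
Qed.

Lemma incM_E2 i x :
  incM i (eid x) = ((i == vid x) || (i == vid (a x)))%:R%R.
Proof.
have [y ->] := vid_surj i; rewrite incM_E !vid_eq.
by rewrite !(fconnect_sym pinj y).
Qed.

Lemma colsum (u : 'rV['F_2]_#|OS|) x :
  ((u *m incM) ord0 (eid x) =
  if vid x == vid (a x) then u ord0 (vid x) else (u ord0 (vid x) + u ord0 (vid (a x))))%R.
Proof.
rewrite mxE (bigD1 (vid x)) //= incM_E2 eqxx /= mulr1.
case: eqP => [E|NE].
  rewrite big1 ?addr0 // => i /negbTE Hi.
  by rewrite incM_E2 -E Hi /= mulr0.
rewrite (bigD1 (vid (a x))) /=; last by apply/eqP => E; apply: NE.
rewrite incM_E2 eqxx orbT mulr1 big1 ?addr0 // => i /andP [/negbTE H1 /negbTE H2].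
by rewrite incM_E2 H1 H2 mulr0.
Qed.

Lemma F2_add0 (x y : 'F_2) : (x + y = 0)%R -> x = y.
Proof.
move/eqP; rewrite addr_eq0 => /eqP ->.
exact: (oppr_pchar2 (pchar_Fp (isT : prime 2))).
Qed.
Lemma F2_two : (2%:R : 'F_2)%R = 0%R.
Proof. have := pchar_Fp (isT : prime 2). by case/andP => _ /eqP. Qed.
Lemma F2_double n : ((n.*2)%:R : 'F_2)%R = 0%R.
Proof. by rewrite -muln2 natrM F2_two mulr0. Qed.

Hypothesis conn : forall x y, connect (fun u v => (v == a u) || (v == p u)) x y.

Lemma ker_const (r : 'rV['F_2]_#|OS|) :
  (r *m incM = 0)%R -> (r <= (const_mx 1%R : 'rV['F_2]_#|OS|))%MS.
Proof.
move=> r0.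
have cst : forall x y, r ord0 (vid x) = r ord0 (vid y).
  move=> x y; apply: (connect_inv (g := fun z => r ord0 (vid z))) (conn x y).
  move=> u v /orP [] /eqP ->.
    have := colsum r u; rewrite r0 mxE.
    by case: eqP => [->|_] // /esym /F2_add0.
  by congr (r ord0 _); apply/eqP; rewrite vid_eq fconnect1.
case: (pickP (fun _ : D => true)) => [x0 _ | none].
  have -> : r = (r ord0 (vid x0) *: const_mx 1)%R.
    apply/rowP => i; have [y ->] := vid_surj i.
    rewrite [RHS]mxE [in RHS]mxE mulr1; exact: cst.
  by apply: scalemx_sub; apply: submx_refl.
have -> : r = 0%R.
  apply/rowP => i; have [y _] := vid_surj i.
  by have := none y.
exact: sub0mx.
Qed.

Lemma rank_incM : #|OS| <= (\rank incM).+1.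
Proof.
have sub : (kermx incM <= (const_mx 1%R : 'rV['F_2]_#|OS|))%MS.
  apply/row_subP => k; apply: ker_const.
  by rewrite -row_mul mulmx_ker row0.
have := mxrankS sub; rewrite mxrank_ker.
have := rank_leq_row (const_mx 1%R : 'rV['F_2]_#|OS|).
move=> h1 h2; have := leq_trans h2 h1.
by rewrite leq_subLR addn1.
Qed.

End Orb.

Lemma fconnect_closed (T : finType) (f : T -> T) (P : pred T) x y :
  P x -> (forall z, P z -> P (f z)) -> fconnect f x y -> P y.
Proof.
move=> Px Hf /connectP [q Hq ->]; elim: q x Px Hq => //= z q IH x Px /andP [/eqP exz Hq].
by apply: IH Hq; rewrite -exz; apply: Hf.
Qed.

Section Poly.
Variables (D : finType) (a s : D -> D).
Hypothesis H : rah_polyhedron a s.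

Local Notation ph := (phi a s).
Local Notation E := (edge_of a).
Local Notation V := (vertex_of s).
Local Notation Fc := (face_of a s).

Lemma aK : involutive a. Proof. exact: rah_a_inv H. Qed.
Lemma s3 x : s (s (s x)) = x. Proof. exact: (rah_s_cube H x). Qed.
Lemma sinj : injective s.
Proof. apply: (can_inj (g := fun x => s (s x))) => x; exact: s3. Qed.
Lemma phinj : injective ph.
Proof. by move=> x y /sinj /(can_inj aK). Qed.
Lemma ainj : injective a. Proof. exact: (can_inj aK). Qed.

Lemma sx_neq x : s x != x. Proof. exact: (rah_s_fpf H x). Qed.
Lemma ax_neq x : a x != x. Proof. exact: (rah_a_fpf H x). Qed.

Lemma fcs x y : fconnect s x y = [|| y == x, y == s x | y == s (s x)].
Proof.
apply/idP/idP => [Hc|].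
  apply: (fconnect_closed (P := fun z => [|| z == x, z == s x | z == s (s x)])) Hc.
    by rewrite eqxx.
  by move=> z /or3P [] /eqP ->; rewrite ?eqxx ?orbT // s3 eqxx.
case/or3P => /eqP ->; first exact: connect0.
  exact: fconnect1.
apply: connect_trans (fconnect1 _ _) (fconnect1 _ _).
Qed.

Lemma fcs_sym x y : fconnect s x y = fconnect s y x.
Proof. exact: fconnect_sym sinj x y. Qed.
Lemma fcp_sym x y : fconnect ph x y = fconnect ph y x.
Proof. exact: fconnect_sym phinj x y. Qed.

Lemma Fc_eqP x y : Fc x = Fc y <-> fconnect ph x y.
Proof. exact: (orb_eqP phinj). Qed.
Lemma V_eqP x y : V x = V y <-> fconnect s x y.
Proof. exact: (orb_eqP sinj). Qed.

Lemma Fc_ph x : Fc (ph x) = Fc x.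
Proof. by apply/Fc_eqP; rewrite fcp_sym fconnect1. Qed.
Lemma V_s x : V (s x) = V x.
Proof. by apply/V_eqP; rewrite fcs_sym fconnect1. Qed.

Lemma Fc_a x : Fc (a x) = Fc (s x).
Proof. by rewrite -Fc_ph /phi aK. Qed.

Lemma inFc x y : (y \in Fc x) = (Fc x == Fc y).
Proof. by rewrite inE; apply/idP/eqP => [/Fc_eqP|/Fc_eqP]. Qed.
Lemma inV x y : (y \in V x) = (V x == V y).
Proof. by rewrite inE; apply/idP/eqP => [/V_eqP|/V_eqP]. Qed.

Lemma Fc_sx_neq x : Fc x != Fc (s x).
Proof.
rewrite -Fc_a; apply/eqP => Ex.
by have := rah_edge_two_faces H x; rewrite inFc Ex eqxx.
Qed.

Lemma E_sym x : E (a x) = E x.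
Proof. by rewrite /edge_of aK setUC. Qed.

Lemma inE_edge x y : (y \in E x) = (y == x) || (y == a x).
Proof. by rewrite !inE. Qed.

Lemma E_eq x y : y \in E x -> E y = E x.
Proof. by rewrite inE_edge => /orP [] /eqP ->; rewrite ?E_sym. Qed.

Lemma eof2 x y : edge_on_face (E x) (Fc y) = (Fc y == Fc x) || (Fc y == Fc (s x)).
Proof.
rewrite -Fc_a; apply/set0Pn/idP => [[z]|/orP [] /eqP ->].
- rewrite !inE => /andP [/orP [] /eqP -> ].
    by rewrite fcp_sym => /Fc_eqP ->; rewrite eqxx.
  by rewrite fcp_sym => /Fc_eqP ->; rewrite eqxx orbT.
- by exists x; rewrite !inE eqxx /=; apply: connect0.
by exists (a x); rewrite !inE eqxx orbT /=; apply: connect0.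
Qed.

Lemma ev_V x y : vertex_on_face s x (Fc y) = [exists z, fconnect s x z && (z \in Fc y)].
Proof.
rewrite /vertex_on_face; apply/idP/existsP => [/set0Pn [z]|[z /andP [H1 H2]]].
  by rewrite !inE => /andP [H1 H2]; exists z; rewrite H1 inE.
by apply/set0Pn; exists z; rewrite in_setI H2 andbT inE.
Qed.

Lemma face_small x : ph (s x) != s x.
Proof.
apply/eqP => Hf.
have : Fc (s x) \subset [set s x].
  apply/subsetP => y; rewrite !inE => Hy.
  apply: (fconnect_closed (P := pred1 (s x)) _ _ Hy) => //=.
  by move=> z /eqP ->; rewrite Hf.
move/subset_leq_card; rewrite cards1 => /(leq_trans (rah_face5 H (s x))).
by [].
Qed.

Lemma E_s_neq x : E (s x) != E x.
Proof.
apply/eqP => Ex.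
have : s x \in E x by rewrite -Ex !inE eqxx.
rewrite inE_edge (negbTE (sx_neq x)) /= => /eqP Hs.
by have := face_small x; rewrite /phi {1}Hs aK eqxx.
Qed.


Lemma V_meet x z :
  (E z :&: V x != set0) = [|| E z == E x, E z == E (s x) | E z == E (s (s x))].
Proof.
apply/idP/idP => [/set0Pn [w]|].
  rewrite in_setI => /andP [Hw]; rewrite inE fcs -(E_eq Hw).
  by case/or3P => /eqP ->; rewrite eqxx ?orbT.
case/or3P => /eqP ->; apply/set0Pn.
- by exists x; rewrite in_setI !inE eqxx /= connect0.
- by exists (s x); rewrite in_setI !inE eqxx /= fconnect1.
by exists (s (s x)); rewrite in_setI !inE eqxx /= fcs eqxx !orbT.
Qed.

Lemma E_ss_neq x : E (s (s x)) != E x.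
Proof. by rewrite eq_sym -{1}(s3 x) E_s_neq. Qed.

Lemma sum_pick (c : {set D}) (K : nat) :
  c \in ES a -> \sum_(e0 in ES a) ((e0 == c) * K) = K.
Proof.
move=> Hc; rewrite (bigD1 c) //= eqxx mul1n big1 ?addn0 // => e0 /andP [_ /negbTE ->].
by rewrite mul0n.
Qed.

Lemma memES' x : E x \in ES a.
Proof. exact: memES. Qed.

Lemma or3_nat (b1 b2 b3 : bool) :
  ~~ (b1 && b2) -> ~~ (b2 && b3) -> ~~ (b1 && b3) ->
  ([|| b1, b2 | b3] : nat) = b1 + b2 + b3.
Proof. by case: b1; case: b2; case: b3. Qed.

Lemma tri3 (b1 b2 b3 : bool) : b1 + b2 + (b2 + b3) + (b3 + b1) = (b1 + b2 + b3).*2.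
Proof. by case: b1; case: b2; case: b3. Qed.

Lemma or2_nat (b1 b2 : bool) : ~~ (b1 && b2) -> ((b1 || b2) : nat) = b1 + b2.
Proof. by case: b1; case: b2. Qed.

Lemma eof_nat x y :
  (edge_on_face (E x) (Fc y) : nat) = (Fc y == Fc x) + (Fc y == Fc (s x)).
Proof.
rewrite eof2 or2_nat //; apply/negP => /andP [/eqP -> /eqP].
by apply/eqP; apply: Fc_sx_neq.
Qed.

Lemma MVF0 : (incM a s *m (incM a ph)^T = 0)%R.
Proof.
apply/matrixP => i k; rewrite !mxE.
have [x ->] := vid_surj i; have [y ->] := vid_surj k.
transitivity (\sum_(j < #|ES a|)
   ((((enum_val j :&: V x != set0) && (enum_val j :&: Fc y != set0)) : nat)%:R : 'F_2))%R.
  by apply: eq_bigr => j _; rewrite /incM !mxE !vidK -natrM mulnb.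
rewrite -natr_sum.
rewrite -(big_enum_val (fun e0 => (((e0 :&: V x != set0) && (e0 :&: Fc y != set0)) : nat))).
have -> : \sum_(e0 in ES a) (((e0 :&: V x != set0) && (e0 :&: Fc y != set0)) : nat)
   = \sum_(e0 in ES a) ((e0 == E x) * edge_on_face (E x) (Fc y)
                       + (e0 == E (s x)) * edge_on_face (E (s x)) (Fc y)
                       + (e0 == E (s (s x))) * edge_on_face (E (s (s x))) (Fc y)).
  apply: eq_bigr => e0 /imsetP [z _ ->].
  rewrite -[[set z; a z]]/(E z) V_meet.
  case: (eqVneq (E z) (E x)) => [->|n1].
    by rewrite [E x == E (s x)]eq_sym [E x == E (s (s x))]eq_sym (negbTE (E_s_neq x)) (negbTE (E_ss_neq x)) /= mul1n !mul0n !addn0.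
  case: (eqVneq (E z) (E (s x))) => [->|n2].
    by rewrite eq_sym (negbTE (E_s_neq (s x))) mul1n !mul0n add0n addn0.
  case: (eqVneq (E z) (E (s (s x)))) => [->|n3] /=.
    by rewrite !mul0n mul1n.
  by rewrite !mul0n.
rewrite big_split big_split /= !sum_pick ?memES' // !eof_nat s3.
by rewrite tri3 F2_double.
Qed.


Lemma conn_ph x y : connect (fun u v => (v == a u) || (v == ph u)) x y.
Proof.
apply: (connect_sub (e := fun u v => (v == a u) || (v == s u))); last exact: (rah_conn H).
move=> u v /orP [] /eqP ->; first by apply: connect1; rewrite eqxx.
apply: (connect_trans (y := a u)); apply: connect1; first by rewrite eqxx.
by rewrite /phi aK eqxx orbT.
Qed.

Lemma conn_s x y : connect (fun u v => (v == a u) || (v == s u)) x y.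
Proof. exact: (rah_conn H). Qed.

Lemma pair_nat (T : eqType) (x1 x2 y1 y2 f : T) :
  x1 != x2 -> y1 != y2 -> (y1 == x1) || (y1 == x2) -> (y2 == x1) || (y2 == x2) ->
  (f == x1) + (f == x2) = (f == y1) + (f == y2).
Proof.
move=> n12 m12 H1 H2.
case/orP: H1 => /eqP ?; case/orP: H2 => /eqP ?; subst => //; rewrite ?eqxx // in m12.
by rewrite addnC.
Qed.

Section Circ.
Variables (e Fa : 'I_5 -> {set D}).
Hypothesis circ : circuit a s e Fa.

Definition EC : {set {set D}} := [set e i | i : 'I_5].

Definition CV : 'rV['F_2]_#|ES a| :=
  \row_j (((enum_val j \in EC) : nat)%:R)%R.

Lemma e_edge i : exists z, e i = E z.
Proof. by case: circ => He _ _ _ _; case: (He i) => z ->; exists z. Qed.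
Lemma F_face i : exists z, Fa i = Fc z.
Proof. by case: circ => _ HF _ _ _; case: (HF i) => z ->; exists z. Qed.
Lemma e_inj : injective e. Proof. by case: circ. Qed.
Lemma F_inj : injective Fa. Proof. by case: circ. Qed.
Lemma e_on i : edge_on_face (e i) (Fa i). Proof. by case: circ => _ _ _ _ /(_ i) []. Qed.
Lemma eS_on i : edge_on_face (e (ordS i)) (Fa i). Proof. by case: circ => _ _ _ _ /(_ i) []. Qed.

Lemma ordS_neq (i : 'I_5) : ordS i != i.
Proof. by case: i => [[|[|[|[|[|?]]]]] ?]. Qed.

Lemma EC_sub : EC \subset ES a.
Proof.
apply/subsetP => c /imsetP [i _ ->]; have [z ->] := e_edge i; exact: memES'.
Qed.

Lemma CF0 : (CV *m (incM a ph)^T = 0)%R.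
Proof.
apply/rowP => kk; rewrite !mxE.
have [y ->] := vid_surj kk.
transitivity (\sum_(j < #|ES a|)
   ((((enum_val j \in EC) && (enum_val j :&: Fc y != set0)) : nat)%:R : 'F_2))%R.
  by apply: eq_bigr => j _; rewrite /incM /CV !mxE !vidK -natrM mulnb.
rewrite -natr_sum.
rewrite -(big_enum_val (fun e0 => (((e0 \in EC) && (e0 :&: Fc y != set0)) : nat))).
have -> : \sum_(e0 in ES a) (((e0 \in EC) && (e0 :&: Fc y != set0)) : nat)
   = \sum_(e0 in EC) ((e0 :&: Fc y != set0) : nat).
  rewrite big_mkcond [RHS]big_mkcond; apply: eq_bigr => e0 _.
  case: (boolP (e0 \in EC)) => Hc /=; last by case: ifP.
  by rewrite (subsetP EC_sub _ Hc).
rewrite big_imset /=; last by move=> i j _ _; apply: e_inj.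
rewrite (eq_bigl xpredT) // (reindex_inj (@ordS_inj 5)) /=.
have -> : \sum_(i < 5) ((e (ordS i) :&: Fc y != set0) : nat)
     = \sum_(i < 5) ((Fc y == Fa i) + (Fc y == Fa (ordS i))).
  apply: eq_bigr => i _.
  have [z Ez] := e_edge (ordS i).
  have := eof_nat z y; rewrite /edge_on_face -Ez => ->.
  have [w1 Fw1] := F_face i; have [w2 Fw2] := F_face (ordS i).
  apply: pair_nat; first exact: Fc_sx_neq.
    by apply/negP => /eqP /F_inj /eqP; rewrite eq_sym (negbTE (ordS_neq i)).
    by have := eS_on i; rewrite Ez Fw1 eof2 -Fw1.
  by have := e_on (ordS i); rewrite Ez Fw2 eof2 -Fw2.
have R : \sum_(i < 5) ((Fc y == Fa (ordS i)) : nat) = \sum_(i < 5) ((Fc y == Fa i) : nat).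
  by rewrite [RHS](reindex_inj (@ordS_inj 5)).
rewrite big_split /= R.
by rewrite addnn F2_double.
Qed.

Lemma CV_sub : (CV <= incM a s)%MS.
Proof.
have rF := rank_incM phinj conn_ph.
have rV := rank_incM sinj conn_s.
have eu : #|OS s| + #|OS ph| = #|ES a| + 2 := rah_euler H.
have sK : (incM a s <= kermx (incM a ph)^T)%MS by rewrite sub_kermx MVF0.
have cK : (CV <= kermx (incM a ph)^T)%MS by rewrite sub_kermx CF0.
have rk : \rank (kermx (incM a ph)^T) <= \rank (incM a s).
  rewrite mxrank_ker mxrank_tr leq_subLR.
  have h := leq_add rV rF.
  rewrite eu in h.
  have h2 : #|ES a| + 2 <= \rank (incM a s) + \rank (incM a ph) + 2.
    by apply: (leq_trans h); rewrite addSn addnS addn2.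
  by rewrite leq_add2r addnC in h2.
have e2 : \rank (incM a s) == \rank (kermx (incM a ph)^T).
  by rewrite eqn_leq rk (mxrankS sK).
move: e2; rewrite (mxrank_leqif_sup sK).2 => kV.
exact: submx_trans cK kV.
Qed.

Lemma CV_E x : CV ord0 (eid a x) = (((E x \in EC) : nat)%:R)%R.
Proof. by rewrite /CV mxE eidK. Qed.

Lemma EC_mem x : (E x \in EC) = [exists j, x \in e j].
Proof.
apply/imsetP/existsP => [[j _ Ej]|[j Hj]].
  by exists j; rewrite -Ej !inE eqxx.
exists j => //; have [z Ez] := e_edge j; rewrite Ez in Hj *.
by rewrite (E_eq Hj).
Qed.

Hypothesis prism : forall (i j : 'I_5) (x y : D), x \in e i -> y \in e j -> fconnect s x y -> x = y.

Lemma side_fun : exists tau : D -> 'F_2,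
  [/\ forall x, tau (s x) = tau x,
      forall x, (forall j, x \notin e j) -> tau (a x) = tau x &
      forall j x, x \in e j -> tau (a x) != tau x].
Proof.
have /submxP [sg Esg] := CV_sub.
exists (fun x => sg ord0 (vid s x)); split.
- by move=> x; congr (sg ord0 _); apply/eqP; rewrite (vid_eq sinj) fcs_sym fconnect1.
- move=> x Hx.
  have := colsum a sinj sg x; rewrite -Esg CV_E EC_mem.
  have -> : [exists j, x \in e j] = false.
    by apply/existsP => [[j Hj]]; have := Hx j; rewrite Hj.
  case: eqP => [->|_] //= /esym /F2_add0 //.
move=> j x Hx.
have := colsum a sinj sg x; rewrite -Esg CV_E EC_mem.
have -> : [exists j, x \in e j] = true by apply/existsP; exists j.
have -> : (vid s x == vid s (a x)) = false.
  apply/negP; rewrite (vid_eq sinj) => Hc.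
  have [z Ez] := e_edge j.
  have Hax : a x \in e j by move: Hx; rewrite Ez !inE => /orP [] /eqP ->; rewrite ?aK eqxx ?orbT.
  by have := prism Hx Hax Hc => /esym /eqP; rewrite (negbTE (ax_neq x)).
move=> Hs; apply/eqP => Heq; move: Hs; rewrite Heq.
rewrite (addrr_pchar2 (pchar_Fp (isT : prime 2))).
by move/eqP; rewrite /= oner_eq0.
Qed.

End Circ.

Definition at_ (ep : {set D}) t := ep :&: V t != set0.

Lemma von_Fc t y :
  vertex_on_face s t (Fc y) = [|| Fc y == Fc t, Fc y == Fc (s t) | Fc y == Fc (s (s t))].
Proof.
rewrite ev_V; apply/existsP/idP => [[z /andP [Hz]]|].
  rewrite inFc fcs in Hz *.
  by case/or3P: Hz => /eqP -> ->; rewrite ?orbT.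
case/or3P => /eqP E1.
- by exists t; rewrite connect0 inFc E1 eqxx.
- by exists (s t); rewrite fconnect1 inFc E1 eqxx.
by exists (s (s t)); rewrite fcs eqxx !orbT inFc E1 eqxx.
Qed.

Lemma Fc_n01 t : Fc t != Fc (s t). Proof. exact: Fc_sx_neq. Qed.
Lemma Fc_n12 t : Fc (s t) != Fc (s (s t)). Proof. exact: Fc_sx_neq. Qed.
Lemma Fc_n20 t : Fc (s (s t)) != Fc t.
Proof. by rewrite -{2}(s3 t); apply: Fc_sx_neq. Qed.

Lemma at_E y t : at_ (E y) t = [|| E y == E t, E y == E (s t) | E y == E (s (s t))].
Proof. exact: V_meet. Qed.

Lemma at_dart (ep : {set D}) t : at_ ep t -> exists2 x, x \in ep & fconnect s t x.
Proof. by case/set0Pn => x; rewrite in_setI inE => /andP [H1 H2]; exists x. Qed.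

Lemma dart_at (ep : {set D}) t x : x \in ep -> fconnect s t x -> at_ ep t.
Proof. by move=> H1 H2; apply/set0Pn; exists x; rewrite in_setI inE H1. Qed.

Lemma pick_dart y p : edge_on_face (E y) (Fc p) ->
  exists x, [/\ E x = E y, Fc x = Fc p & x \in E y].
Proof.
case/set0Pn => x; rewrite in_setI => /andP [Hx Hp].
exists x; split => //; first exact: E_eq.
by apply/esym/eqP; rewrite -inFc.
Qed.

Lemma other_face x q : edge_on_face (E x) (Fc q) -> Fc q != Fc x -> Fc q = Fc (a x).
Proof.
rewrite eof2 Fc_a => /orP [] /eqP -> //.
by rewrite eqxx.
Qed.

Lemma edge_unique y y' p q : Fc p != Fc q ->
  edge_on_face (E y) (Fc p) -> edge_on_face (E y) (Fc q) ->
  edge_on_face (E y') (Fc p) -> edge_on_face (E y') (Fc q) -> E y = E y'.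
Proof.
move=> npq h1 h2 h3 h4.
have [x [Ex Fx _]] := pick_dart h1.
have [x' [Ex' Fx' _]] := pick_dart h3.
rewrite -Ex in h2; rewrite -Ex' in h4.
have Q1 := other_face h2; rewrite Fx eq_sym in Q1; have {}Q1 := Q1 npq.
have Q2 := other_face h4; rewrite Fx' eq_sym in Q2; have {}Q2 := Q2 npq.
have := rah_faces_meet H (x := x) (y := x').
rewrite inFc Fx Fx' eqxx inFc -Q1 -Q2 eqxx => /(_ isT isT) exx.
by rewrite -Ex -Ex' exx.
Qed.

Lemma edge_at_face y t w : at_ (E y) t -> edge_on_face (E y) (Fc w) ->
  vertex_on_face s t (Fc w).
Proof.
rewrite at_E von_Fc; case/or3P => /eqP ->; rewrite eof2.
- by case/orP => ->; rewrite ?orbT.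
- by case/orP => ->; rewrite ?orbT.
by rewrite s3; case/orP => ->; rewrite ?orbT.
Qed.

Lemma adj_at t p q : Fc p != Fc q ->
  vertex_on_face s t (Fc p) -> vertex_on_face s t (Fc q) ->
  exists y, [/\ at_ (E y) t, edge_on_face (E y) (Fc p) & edge_on_face (E y) (Fc q)].
Proof.
rewrite !von_Fc => npq.
have A0 : at_ (E t) t by rewrite at_E eqxx.
have A1 : at_ (E (s t)) t by rewrite at_E eqxx orbT.
have A2 : at_ (E (s (s t))) t by rewrite at_E eqxx !orbT.
case/or3P => /eqP Ep; case/or3P => /eqP Eq; rewrite Ep Eq in npq *;
  try by rewrite eqxx in npq.
- by exists t; rewrite !eof2 !eqxx ?orbT.
- by exists (s (s t)); rewrite !eof2 s3 !eqxx ?orbT.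
- by exists t; rewrite !eof2 !eqxx ?orbT.
- by exists (s t); rewrite !eof2 !eqxx ?orbT.
- by exists (s (s t)); rewrite !eof2 s3 !eqxx ?orbT.
by exists (s t); rewrite !eof2 !eqxx ?orbT.
Qed.

Lemma three_faces t p q r w : Fc p != Fc q -> Fc q != Fc r -> Fc p != Fc r ->
  vertex_on_face s t (Fc p) -> vertex_on_face s t (Fc q) -> vertex_on_face s t (Fc r) ->
  vertex_on_face s t (Fc w) -> [|| Fc w == Fc p, Fc w == Fc q | Fc w == Fc r].
Proof.
rewrite !von_Fc => n1 n2 n3 P Q R W; move: n1 n2 n3.
case/or3P: P => /eqP ->; case/or3P: Q => /eqP ->; case/or3P: R => /eqP ->;
   case/or3P: W => /eqP ->; by rewrite ?eqxx ?orbT.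
Qed.

Lemma edge_two y p q r :
  edge_on_face (E y) (Fc p) -> edge_on_face (E y) (Fc q) -> edge_on_face (E y) (Fc r) ->
  [|| Fc p == Fc q, Fc q == Fc r | Fc p == Fc r].
Proof.
rewrite !eof2.
by case/orP => /eqP ->; case/orP => /eqP ->; case/orP => /eqP ->; rewrite ?eqxx ?orbT.
Qed.

Lemma other_face_ex y p : edge_on_face (E y) (Fc p) ->
  exists q, Fc q != Fc p /\ edge_on_face (E y) (Fc q).
Proof.
rewrite eof2 => /orP [] /eqP ->.
  exists (s y); split; first by rewrite eq_sym Fc_sx_neq.
  by rewrite eof2 eqxx orbT.
exists y; split; first exact: Fc_sx_neq.
by rewrite eof2 eqxx.
Qed.

Lemma no_loop x : ~~ fconnect s x (a x).
Proof.
rewrite fcs (negbTE (ax_neq x)) /=; apply/negP => /orP [] /eqP Hx.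
  by have := face_small x; rewrite /phi -Hx aK Hx eqxx.
by have := face_small (s (s x)); rewrite /phi s3 Hx s3 eqxx.
Qed.

Lemma other_end x t : at_ (E x) t -> ~~ fconnect s t x -> fconnect s t (a x).
Proof.
case/at_dart => y; rewrite inE_edge => /orP [] /eqP -> //.
by move=> ->.
Qed.

Lemma same_edge x y z : x \in E z -> y \in E z -> fconnect s x y -> x = y.
Proof.
rewrite !inE_edge => /orP [] /eqP -> /orP [] /eqP -> //.
  by move=> Hc; have := no_loop z; rewrite Hc.
by rewrite fcs_sym => Hc; have := no_loop z; rewrite Hc.
Qed.

Lemma prism_of k (ee : 'I_k -> {set D}) :
  (forall i, exists z, ee i = E z) ->
  (forall i j t, i != j -> at_ (ee i) t -> at_ (ee j) t -> False) ->
  forall (i j : 'I_k) (x y : D), x \in ee i -> y \in ee j -> fconnect s x y -> x = y.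
Proof.
move=> He Hn i j x y Hx Hy Hc.
case: (eqVneq i j) Hy => [<-|nij] Hy.
  by have [z Ez] := He i; rewrite Ez in Hx Hy; apply: same_edge Hx Hy Hc.
exfalso; apply: (Hn i j x nij); first exact: (dart_at Hx (connect0 _ _)).
exact: (dart_at Hy Hc).
Qed.

Lemma edge_at_face' ep t w : (exists z, ep = E z) -> at_ ep t -> edge_on_face ep (Fc w) ->
  vertex_on_face s t (Fc w).
Proof. by case=> z ->; apply: edge_at_face. Qed.

Definition f3 {T : Type} (x0 x1 x2 : T) (i : 'I_3) : T := nth x0 [:: x0; x1; x2] i.
Definition f4 {T : Type} (x0 x1 x2 x3 : T) (i : 'I_4) : T := nth x0 [:: x0; x1; x2; x3] i.

Lemma no3 p0 p1 p2 y0 y1 y2 :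
  Fc p0 != Fc p1 -> Fc p1 != Fc p2 -> Fc p0 != Fc p2 ->
  edge_on_face (E y0) (Fc p2) -> edge_on_face (E y0) (Fc p0) ->
  edge_on_face (E y1) (Fc p0) -> edge_on_face (E y1) (Fc p1) ->
  edge_on_face (E y2) (Fc p1) -> edge_on_face (E y2) (Fc p2) ->
  exists t, [&& vertex_on_face s t (Fc p0), vertex_on_face s t (Fc p1) &
                vertex_on_face s t (Fc p2)].
Proof.
move=> n01 n12 n02 h02 h00 h10 h11 h21 h22.
case: (boolP [exists t, [&& vertex_on_face s t (Fc p0), vertex_on_face s t (Fc p1) &
                vertex_on_face s t (Fc p2)]]) => [/existsP [t Ht]|/existsPn Hno]; first by exists t.
exfalso.
pose ee := f3 (E y0) (E y1) (E y2); pose FF := f3 (Fc p0) (Fc p1) (Fc p2).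
have Hee : forall i, exists z, ee i = E z.
  by case=> [[|[|[|?]]] ?] //; [exists y0|exists y1|exists y2].
have cover : forall i j m : 'I_3, i != j ->
    edge_on_face (ee i) (FF m) || edge_on_face (ee j) (FF m).
  by case=> [[|[|[|?]]] ?] //; case=> [[|[|[|?]]] ?] //; case=> [[|[|[|?]]] ?] //=;
    rewrite ?h02 ?h00 ?h10 ?h11 ?h21 ?h22 ?orbT.
have all3 : forall i j t, i != j -> at_ (ee i) t -> at_ (ee j) t ->
    forall m, vertex_on_face s t (FF m).
  move=> i j t nij ai aj m.
  have [z Ez] : exists z, FF m = Fc z.
    by case: m => [[|[|[|?]]] ?] //; [exists p0|exists p1|exists p2].
  rewrite Ez; case/orP: (cover i j m nij) => Hc.
    by apply: edge_at_face' (Hee i) ai _; rewrite -Ez.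
  by apply: edge_at_face' (Hee j) aj _; rewrite -Ez.
apply: (rah_no_prism3 H (e := ee) (F := FF)); split; last first.
  apply: prism_of => // i j t nij ai aj.
  have := Hno t; rewrite (all3 _ _ _ nij ai aj (Ordinal (isT : 0 < 3))).
  rewrite (all3 _ _ _ nij ai aj (Ordinal (isT : 1 < 3))).
  by rewrite (all3 _ _ _ nij ai aj (Ordinal (isT : 2 < 3))).
split.
- by move=> i; have [z ->] := Hee i; exists z.
- by case=> [[|[|[|?]]] ?] //; [exists p0|exists p1|exists p2].
- move=> i j Eij; apply/eqP; apply/negPn/negP => nij.
  have c3 : forall m, edge_on_face (ee i) (FF m).
    by move=> m; case/orP: (cover i j m nij) => //; rewrite Eij.
  have [z Ez] := Hee i.
  have c0 : edge_on_face (E z) (Fc p0) by rewrite -Ez; exact: (c3 (Ordinal (isT : 0 < 3))).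
  have c1 : edge_on_face (E z) (Fc p1) by rewrite -Ez; exact: (c3 (Ordinal (isT : 1 < 3))).
  have c2 : edge_on_face (E z) (Fc p2) by rewrite -Ez; exact: (c3 (Ordinal (isT : 2 < 3))).
  by have := edge_two c0 c1 c2; rewrite (negbTE n01) (negbTE n12) (negbTE n02).
- move=> i j Hij; apply: val_inj; move: Hij.
  case: i => [[|[|[|?]]] ?] //; case: j => [[|[|[|?]]] ?] //= /eqP;
    rewrite ?(negbTE n01) ?(negbTE n12) ?(negbTE n02) // eq_sym ?(negbTE n01) ?(negbTE n12) ?(negbTE n02) //.
by case=> [[|[|[|?]]] ?] //=; split.
Qed.

Lemma no4 p0 p1 p2 p3 y0 y1 y2 y3 :
  Fc p0 != Fc p1 -> Fc p0 != Fc p2 -> Fc p0 != Fc p3 ->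
  Fc p1 != Fc p2 -> Fc p1 != Fc p3 -> Fc p2 != Fc p3 ->
  edge_on_face (E y0) (Fc p3) -> edge_on_face (E y0) (Fc p0) ->
  edge_on_face (E y1) (Fc p0) -> edge_on_face (E y1) (Fc p1) ->
  edge_on_face (E y2) (Fc p1) -> edge_on_face (E y2) (Fc p2) ->
  edge_on_face (E y3) (Fc p2) -> edge_on_face (E y3) (Fc p3) ->
  exists t, let v := fun p => vertex_on_face s t (Fc p) in
    [|| [&& v p0, v p1 & v p2], [&& v p1, v p2 & v p3],
        [&& v p2, v p3 & v p0] | [&& v p3, v p0 & v p1]].
Proof.
move=> n01 n02 n03 n12 n13 n23 h03 h00 h10 h11 h21 h22 h32 h33.
set B := fun t => let v := fun p => vertex_on_face s t (Fc p) in
    [|| [&& v p0, v p1 & v p2], [&& v p1, v p2 & v p3],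
        [&& v p2, v p3 & v p0] | [&& v p3, v p0 & v p1]].
case: (boolP [exists t, B t]) => [/existsP [t Ht]|/existsPn Hno]; first by exists t.
exfalso.
pose ee := f4 (E y0) (E y1) (E y2) (E y3); pose FF := f4 (Fc p0) (Fc p1) (Fc p2) (Fc p3).
have Hee : forall i, exists z, ee i = E z.
  by case=> [[|[|[|[|?]]]] ?] //; [exists y0|exists y1|exists y2|exists y3].
have HFF : forall m, exists z, FF m = Fc z.
  by case=> [[|[|[|[|?]]]] ?] //; [exists p0|exists p1|exists p2|exists p3].
pose cv i j m := edge_on_face (ee i) (FF m) || edge_on_face (ee j) (FF m).
have cover : forall i j : 'I_4, i != j ->
    [|| [&& cv i j (Ordinal (isT : 0 < 4)), cv i j (Ordinal (isT : 1 < 4)) & cv i j (Ordinal (isT : 2 < 4))],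
        [&& cv i j (Ordinal (isT : 1 < 4)), cv i j (Ordinal (isT : 2 < 4)) & cv i j (Ordinal (isT : 3 < 4))],
        [&& cv i j (Ordinal (isT : 2 < 4)), cv i j (Ordinal (isT : 3 < 4)) & cv i j (Ordinal (isT : 0 < 4))] |
        [&& cv i j (Ordinal (isT : 3 < 4)), cv i j (Ordinal (isT : 0 < 4)) & cv i j (Ordinal (isT : 1 < 4))]].
  rewrite /cv.
  by case=> [[|[|[|[|?]]]] ?] //; case=> [[|[|[|[|?]]]] ?] //= _;
    rewrite ?h03 ?h00 ?h10 ?h11 ?h21 ?h22 ?h32 ?h33 ?orbT.
have vm : forall i j t m, at_ (ee i) t -> at_ (ee j) t -> cv i j m -> vertex_on_face s t (FF m).
  move=> i j t m ai aj; have [z Ez] := HFF m; rewrite /cv Ez => /orP [] Hc.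
    exact: edge_at_face' (Hee i) ai Hc.
  exact: edge_at_face' (Hee j) aj Hc.
apply: (rah_no_prism4 H (e := ee) (F := FF)); split; last first.
  apply: prism_of => // i j t nij ai aj.
  have := Hno t; rewrite /B.
  by case/or4P: (cover i j nij) => /and3P [c1 c2 c3];
    rewrite (vm _ _ _ _ ai aj c1) (vm _ _ _ _ ai aj c2) (vm _ _ _ _ ai aj c3) ?orbT.
split.
- by move=> i; have [z ->] := Hee i; exists z.
- by move=> i; have [z ->] := HFF i; exists z.
- move=> i j Eij; apply/eqP; apply/negPn/negP => nij.
  have [z Ez] := Hee i.
  have c3 : forall m, cv i j m -> edge_on_face (E z) (FF m).
    by move=> m; rewrite /cv -Eij orbb Ez.
  case/or4P: (cover i j nij) => /and3P [/c3 c1 /c3 c2 /c3 c3'];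
    by have := edge_two c1 c2 c3'; rewrite /= ?(negbTE n01) ?(negbTE n02) ?(negbTE n03)
      ?(negbTE n12) ?(negbTE n13) ?(negbTE n23) // ?[Fc p3 == _]eq_sym ?[Fc p2 == _]eq_sym
      ?(negbTE n01) ?(negbTE n02) ?(negbTE n03) ?(negbTE n12) ?(negbTE n13) ?(negbTE n23).
- move=> i j Hij; apply: val_inj; move: Hij.
  case: i => [[|[|[|[|?]]]] ?] //; case: j => [[|[|[|[|?]]]] ?] //= /eqP;
    rewrite ?(negbTE n01) ?(negbTE n02) ?(negbTE n03) ?(negbTE n12) ?(negbTE n13) ?(negbTE n23) //
    eq_sym ?(negbTE n01) ?(negbTE n02) ?(negbTE n03) ?(negbTE n12) ?(negbTE n13) ?(negbTE n23) //.
by case=> [[|[|[|[|?]]]] ?] //=; split.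
Qed.

Lemma V_conn t t' : fconnect s t t' -> V t = V t'.
Proof. by move/V_eqP. Qed.

Lemma von_conn t t' P : fconnect s t t' -> vertex_on_face s t P = vertex_on_face s t' P.
Proof. by move/V_conn; rewrite /vertex_on_face => ->. Qed.

Lemma at_conn ep t t' : fconnect s t t' -> at_ ep t = at_ ep t'.
Proof. by move/V_conn; rewrite /at_ => ->. Qed.

Lemma third_face t p q : vertex_on_face s t (Fc p) -> vertex_on_face s t (Fc q) -> Fc p != Fc q ->
  exists g, [/\ vertex_on_face s t (Fc g), Fc g != Fc p & Fc g != Fc q].
Proof.
have A0 : vertex_on_face s t (Fc t) by rewrite von_Fc eqxx.
have A1 : vertex_on_face s t (Fc (s t)) by rewrite von_Fc eqxx orbT.
have A2 : vertex_on_face s t (Fc (s (s t))) by rewrite von_Fc eqxx !orbT.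
have n01 := Fc_n01 t; have n12 := Fc_n12 t; have n20 := Fc_n20 t.
rewrite !von_Fc; case/or3P => /eqP ->; case/or3P => /eqP -> //; rewrite ?eqxx // => _.
- by exists (s (s t)); split => //; rewrite // eq_sym.
- by exists (s t); split => //; rewrite eq_sym.
- by exists (s (s t)); split => //; rewrite eq_sym.
- by exists t; split => //; rewrite eq_sym.
- by exists (s t); split => //; rewrite eq_sym.
by exists t; split => //; rewrite eq_sym.
Qed.

Lemma not_von t p q r w : Fc p != Fc q -> Fc q != Fc r -> Fc p != Fc r ->
  vertex_on_face s t (Fc p) -> vertex_on_face s t (Fc q) -> vertex_on_face s t (Fc r) ->
  Fc w != Fc p -> Fc w != Fc q -> Fc w != Fc r -> ~~ vertex_on_face s t (Fc w).
Proof.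
move=> n1 n2 n3 v1 v2 v3 m1 m2 m3; apply/negP => vw.
by have := three_faces n1 n2 n3 v1 v2 v3 vw; rewrite (negbTE m1) (negbTE m2) (negbTE m3).
Qed.

Lemma dist_vertex t t' P : vertex_on_face s t P -> ~~ vertex_on_face s t' P -> ~~ fconnect s t t'.
Proof. by move=> h1; apply: contra => /von_conn <-. Qed.

Lemma von_dart t g : vertex_on_face s t (Fc g) -> exists2 x, x \in Fc g & fconnect s t x.
Proof. by rewrite ev_V => /existsP [x /andP [h1 h2]]; exists x. Qed.

Lemma two_edges_at t p q g y1 y2 y :
  Fc p != Fc q -> Fc q != Fc g -> Fc p != Fc g ->
  vertex_on_face s t (Fc p) -> vertex_on_face s t (Fc q) -> vertex_on_face s t (Fc g) ->
  edge_on_face (E y1) (Fc p) -> edge_on_face (E y1) (Fc g) ->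
  edge_on_face (E y2) (Fc q) -> edge_on_face (E y2) (Fc g) ->
  at_ (E y) t -> edge_on_face (E y) (Fc g) -> E y = E y1 \/ E y = E y2.
Proof.
move=> npq nqg npg vp vq vg h1p h1g h2q h2g ay hy.
have [r [nrg hr]] := other_face_ex hy.
have vr := edge_at_face ay hr.
case/or3P: (three_faces npq nqg npg vp vq vg vr) => /eqP Er.
- by left; rewrite Er in hr nrg; apply: (edge_unique npg).
- by right; rewrite Er in hr nrg; apply: (edge_unique nqg).
by rewrite Er eqxx in nrg.
Qed.

Lemma step t t1 t2 p q g y1 y2 z :
  Fc p != Fc q -> Fc q != Fc g -> Fc p != Fc g ->
  vertex_on_face s t (Fc p) -> vertex_on_face s t (Fc q) -> vertex_on_face s t (Fc g) ->
  edge_on_face (E y1) (Fc p) -> edge_on_face (E y1) (Fc g) ->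
  edge_on_face (E y2) (Fc q) -> edge_on_face (E y2) (Fc g) ->
  at_ (E y1) t1 -> at_ (E y2) t2 -> ~~ fconnect s t t1 -> ~~ fconnect s t t2 ->
  z \in Fc g -> fconnect s t z -> fconnect s t1 (ph z) || fconnect s t2 (ph z).
Proof.
move=> npq nqg npg vp vq vg h1p h1g h2q h2g a1 a2 d1 d2 zg tz.
have az : at_ (E z) t by apply: (dart_at (x := z)) => //; rewrite !inE eqxx.
have hz : edge_on_face (E z) (Fc g).
  by apply/set0Pn; exists z; rewrite in_setI !inE eqxx /=; rewrite inFc in zg; apply/Fc_eqP; apply/eqP.
have key : forall t', at_ (E z) t' -> ~~ fconnect s t t' -> fconnect s t' (ph z).
  move=> t' at' dt'.
  have nz : ~~ fconnect s t' z.
    by apply: contra dt' => Hc; apply: connect_trans tz _; rewrite fcs_sym.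
  have := other_end at' nz => Ha.
  by apply: connect_trans Ha _; rewrite /phi fconnect1.
case: (two_edges_at npq nqg npg vp vq vg h1p h1g h2q h2g az hz) => Ez.
  by rewrite key // Ez.
by rewrite (key t2) ?orbT // Ez.
Qed.

Lemma other_is y p1 p2 p3 t : Fc p1 != Fc p2 -> Fc p2 != Fc p3 -> Fc p1 != Fc p3 ->
  vertex_on_face s t (Fc p1) -> vertex_on_face s t (Fc p2) -> vertex_on_face s t (Fc p3) ->
  at_ (E y) t -> edge_on_face (E y) (Fc p1) -> ~~ edge_on_face (E y) (Fc p2) ->
  edge_on_face (E y) (Fc p3).
Proof.
move=> n12 n23 n13 v1 v2 v3 ay h1 nh2.
have [q [nq1 hq]] := other_face_ex h1.
have vq := edge_at_face ay hq.
case/or3P: (three_faces n12 n23 n13 v1 v2 v3 vq) => /eqP Eq; rewrite Eq in hq nq1.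
- by rewrite eqxx in nq1.
- by rewrite hq in nh2.
by [].
Qed.

Lemma not_on_uniq y y' p q : Fc p != Fc q -> edge_on_face (E y) (Fc p) ->
  edge_on_face (E y') (Fc p) -> edge_on_face (E y') (Fc q) -> E y != E y' ->
  ~~ edge_on_face (E y) (Fc q).
Proof.
move=> npq h1 h2 h3 ne; apply/negP => h4.
by have := edge_unique npq h1 h4 h2 h3; apply/eqP.
Qed.

Section CaseA.
Variables (e Fa : 'I_5 -> {set D}).
Hypothesis circ : circuit a s e Fa.
Hypothesis prism : forall (i j : 'I_5) (x y : D), x \in e i -> y \in e j -> fconnect s x y -> x = y.

Lemma o5S (j : 'I_5) : ordS (ordS (ordS (ordS (ordS j)))) = j.
Proof. by apply: val_inj; case: j => [[|[|[|[|[|?]]]]] ?]. Qed.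
Lemma o5_neq (j : 'I_5) : [/\ ordS j != j, ordS (ordS j) != j, ordS (ordS (ordS j)) != j & ordS (ordS (ordS (ordS j))) != j].
Proof. by case: j => [[|[|[|[|[|?]]]]] ?]. Qed.
Lemma o5_tri (j k l : 'I_5) : j != k -> k != l -> j != l -> [|| k == ordS (ordS j), j == ordS (ordS k), l == ordS (ordS j), j == ordS (ordS l), l == ordS (ordS k) | k == ordS (ordS l)].
Proof. by case: j => [[|[|[|[|[|?]]]]] ?] //; case: k => [[|[|[|[|[|?]]]]] ?] //; case: l => [[|[|[|[|[|?]]]]] ?]. Qed.
Lemma o5_all (i j : 'I_5) : [|| j == i, j == ordS i, j == ordS (ordS i), j == ordS (ordS (ordS i)) | j == ordS (ordS (ordS (ordS i)))].
Proof. by case: i => [[|[|[|[|[|?]]]]] ?] //; case: j => [[|[|[|[|[|?]]]]] ?]. Qed.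

Lemma C1 j k t : at_ (e j) t -> at_ (e k) t -> j = k.
Proof.
case/at_dart => x Hx Htx; case/at_dart => y Hy Hty.
have Hxy : fconnect s x y by apply: connect_trans Hty; rewrite fcs_sym.
have exy := prism Hx Hy Hxy; subst y.
apply: (e_inj circ); have [w Ew] := e_edge circ j; have [w' Ew'] := e_edge circ k.
rewrite Ew in Hx; rewrite Ew' in Hy; rewrite Ew Ew'.
by rewrite -(E_eq Hx) -(E_eq Hy).
Qed.

Lemma F_neq j k : j != k -> Fa j != Fa k.
Proof. by apply: contra => /eqP /(F_inj circ) ->. Qed.

Lemma adj_e j : edge_on_face (e (ordS j)) (Fa j) /\ edge_on_face (e (ordS j)) (Fa (ordS j)).
Proof. by split; [apply: (eS_on circ) | apply: (e_on circ)]. Qed.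

Lemma e_at_two k t : vertex_on_face s t (Fa k) -> vertex_on_face s t (Fa (ordS k)) ->
  at_ (e (ordS k)) t.
Proof.
move=> vk vk1.
have [p Ep] := F_face circ k; have [q Eq] := F_face circ (ordS k).
rewrite Ep Eq in vk vk1.
have npq : Fc p != Fc q by rewrite -Ep -Eq; apply: F_neq; rewrite eq_sym; case: (o5_neq k).
have [y [Ay Hp Hq]] := adj_at npq vk vk1.
have [w Ew] := e_edge circ (ordS k).
have [h1 h2] := adj_e k; rewrite Ew Ep Eq in h1 h2.
by rewrite Ew -(edge_unique npq Hp Hq h1 h2).
Qed.

Lemma H1 j t : vertex_on_face s t (Fa j) -> vertex_on_face s t (Fa (ordS j)) ->
  vertex_on_face s t (Fa (ordS (ordS j))) -> False.
Proof.
move=> v0 v1 v2.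
have := C1 (e_at_two v0 v1) (e_at_two v1 v2).
by case: (o5_neq (ordS j)) => /eqP n _ _ _ Eq; apply: n; exact: esym Eq.
Qed.

Lemma H2 j y : edge_on_face (E y) (Fa j) -> edge_on_face (E y) (Fa (ordS (ordS j))) -> False.
Proof.
move=> h0 h2.
have [p0 E0] := F_face circ j; have [p1 E1] := F_face circ (ordS j).
have [p2 E2] := F_face circ (ordS (ordS j)).
have [w1 Ew1] := e_edge circ (ordS j); have [w2 Ew2] := e_edge circ (ordS (ordS j)).
case: (o5_neq j) => n1 n2 _ _; case: (o5_neq (ordS j)) => n1' _ _ _.
have d01 : Fc p0 != Fc p1 by rewrite -E0 -E1 F_neq // eq_sym.
have d12 : Fc p1 != Fc p2 by rewrite -E1 -E2 F_neq // eq_sym.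
have d02 : Fc p0 != Fc p2 by rewrite -E0 -E2 F_neq // eq_sym.
have [a1 b1] := adj_e j; have [a2 b2] := adj_e (ordS j).
rewrite Ew1 E0 E1 in a1 b1; rewrite Ew2 E1 E2 in a2 b2.
rewrite E0 in h0; rewrite E2 in h2.
have [t /and3P [v0 v1 v2]] := no3 d01 d12 d02 h2 h0 a1 b1 a2 b2.
by apply: (@H1 j t); rewrite ?E0 ?E1 ?E2.
Qed.

Lemma pair2 j k t : k = ordS (ordS j) -> vertex_on_face s t (Fa j) -> vertex_on_face s t (Fa k) -> False.
Proof.
move=> -> vj vk.
have [p Ep] := F_face circ j; have [q Eq] := F_face circ (ordS (ordS j)).
rewrite Ep in vj; rewrite Eq in vk.
have npq : Fc p != Fc q by rewrite -Ep -Eq F_neq // eq_sym; case: (o5_neq j).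
have [y [_ Hp Hq]] := adj_at npq vj vk.
by apply: (@H2 j y); rewrite ?Ep ?Eq.
Qed.

Lemma notri j k l t : j != k -> k != l -> j != l ->
  vertex_on_face s t (Fa j) -> vertex_on_face s t (Fa k) -> vertex_on_face s t (Fa l) -> False.
Proof.
move=> njk nkl njl vj vk vl.
case/or4P: (o5_tri njk nkl njl) => [/eqP E|/eqP E|/eqP E|/orP [/eqP E|/orP [] /eqP E]].
- exact: pair2 E vj vk.
- exact: pair2 E vk vj.
- exact: pair2 E vj vl.
- exact: pair2 E vl vj.
- exact: pair2 E vk vl.
exact: pair2 E vl vk.
Qed.

Lemma count1 (G : {set D}) j t (Win : pred D) :
  at_ (e j) t -> vertex_on_face s t G -> (forall x, x \in G -> Win x) ->
  (forall x y, Win x -> fconnect s x y -> Win y) ->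
  (forall x, Win x -> at_ (e j) x -> fconnect s t x) ->
  #|[set x in e j | vertex_on_face s x G]| = 1.
Proof.
move=> aj vt hG hW hA.
have [y Hy Hty] := at_dart aj.
have [w Ew] := e_edge circ j.
have Ej : e j = E y by rewrite Ew in Hy *; rewrite (E_eq Hy).
have -> : [set x in e j | vertex_on_face s x G] = [set y].
  apply/setP => x; rewrite !inE Ej inE_edge.
  case: (eqVneq x y) => [->|nxy] /=; first by rewrite -(von_conn _ Hty).
  case: (eqVneq x (a y)) => [->|//] /=.
  apply/negbTE; rewrite /vertex_on_face negbK; apply/eqP/setP => x'; rewrite in_setI in_set0 inE; apply/negP => /andP [h1 h2].
  have Wa : Win (a y) by apply: hW (hG _ h2) _; rewrite fcs_sym.
  have aa : at_ (e j) (a y) by apply: (dart_at (x := a y)) => //; rewrite Ej !inE eqxx orbT.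
  have := hA _ Wa aa => Hta.
  have : fconnect s y (a y) by apply: connect_trans Hta; rewrite fcs_sym.
  by rewrite (negbTE (no_loop y)).
exact: cards1.
Qed.

Lemma idx5 (i : 'I_5) :
  [/\ ordS (ordS (ordS (ordS (ordS i)))) = i,
      [&& i != ordS i, i != ordS (ordS i), i != ordS (ordS (ordS i)) & i != ordS (ordS (ordS (ordS i)))],
      [&& ordS i != ordS (ordS i), ordS i != ordS (ordS (ordS i)) & ordS i != ordS (ordS (ordS (ordS i)))] &
      [&& ordS (ordS i) != ordS (ordS (ordS i)), ordS (ordS i) != ordS (ordS (ordS (ordS i))) &
          ordS (ordS (ordS i)) != ordS (ordS (ordS (ordS i)))]].
Proof. by split; [apply: o5S|..]; case: i => [[|[|[|[|[|?]]]]] ?]. Qed.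

Lemma caseA (i : 'I_5) x0 y0 z x1 z1 :
  edge_on_face (E x0) (Fa i) -> E x0 != e i -> E x0 != e (ordS i) ->
  y0 \in e i -> z \in e (ordS i) -> fconnect s x0 y0 -> fconnect s (a x0) z ->
  edge_on_face (E x1) (Fa (ordS i)) -> E x1 != e (ordS i) -> E x1 != e (ordS (ordS i)) ->
  fconnect s x1 z -> z1 \in e (ordS (ordS i)) -> fconnect s (a x1) z1 ->
  trivial_circuit a s e.
Proof.
move=> on0 ne0 ne0' Hy0 Hz Hxy0 Hxz on1 ne1 ne1' Hx1z Hz1 Hxz1.
have [E0 /and4P [d01 d02 d03 d04] /and3P [d12 d13 d14] /and3P [d23 d24 d34]] := idx5 i.
have P1 := adj_e i; have P2 := adj_e (ordS i); have P3 := adj_e (ordS (ordS i)).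
have P4 := adj_e (ordS (ordS (ordS i))); have P0 := adj_e (ordS (ordS (ordS (ordS i)))).
rewrite E0 in P0.
have hH2 := @H2; have hpair := @pair2; have hnotri := @notri.
set (i1 := ordS i) in *. set (i2 := ordS i1) in *. set (i3 := ordS i2) in *.
set (i4 := ordS i3) in *.
have [pA EA] := F_face circ i4; have [pB EB] := F_face circ i.
have [pC EC] := F_face circ i1; have [pD ED] := F_face circ i2.
have [pE EE] := F_face circ i3.
have [w0 Ew0] := e_edge circ i; have [w1 Ew1] := e_edge circ i1.
have [w2 Ew2] := e_edge circ i2; have [w3 Ew3] := e_edge circ i3.
have [w4 Ew4] := e_edge circ i4.
have FN : forall j k p q, j != k -> Fa j = Fc p -> Fa k = Fc q -> Fc p != Fc q.
  by move=> j k p q njk <- <-; apply: F_neq.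
have nAB : Fc pA != Fc pB by apply: (FN i4 i); rewrite // eq_sym.
have nAC : Fc pA != Fc pC by apply: (FN i4 i1); rewrite // eq_sym.
have nAD : Fc pA != Fc pD by apply: (FN i4 i2); rewrite // eq_sym.
have nAE : Fc pA != Fc pE by apply: (FN i4 i3); rewrite // eq_sym.
have nBC : Fc pB != Fc pC by apply: (FN i i1).
have nBD : Fc pB != Fc pD by apply: (FN i i2).
have nBE : Fc pB != Fc pE by apply: (FN i i3).
have nCD : Fc pC != Fc pD by apply: (FN i1 i2).
have nCE : Fc pC != Fc pE by apply: (FN i1 i3).
have nDE : Fc pD != Fc pE by apply: (FN i2 i3).
case: P0 => e0A e0B; case: P1 => e1B e1C; case: P2 => e2C e2D; case: P3 => e3D e3E.
case: P4 => e4E e4A.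
rewrite Ew0 EA EB in e0A e0B; rewrite Ew1 EB EC in e1B e1C; rewrite Ew2 EC ED in e2C e2D.
rewrite Ew3 ED EE in e3D e3E; rewrite Ew4 EE EA in e4E e4A.
rewrite EB in on0; rewrite EC in on1.
have at_d_u : at_ (E x0) x0 by apply: (dart_at (x := x0)); rewrite ?inE ?eqxx ?connect0.
have at_d_v : at_ (E x0) z by apply: (dart_at (x := a x0)); rewrite ?inE ?eqxx ?orbT // fcs_sym.
have at_d'_v : at_ (E x1) z by apply: (dart_at (x := x1)); rewrite ?inE ?eqxx // fcs_sym.
have at_d'_w : at_ (E x1) (a x1) by apply: (dart_at (x := a x1)); rewrite ?inE ?eqxx ?orbT ?connect0.
have at0_u : at_ (E w0) x0 by rewrite -Ew0; apply: (dart_at Hy0).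
have at1_v : at_ (E w1) z by rewrite -Ew1; apply: (dart_at Hz); apply: connect0.
have at2_w : at_ (E w2) (a x1) by rewrite -Ew2; apply: (dart_at Hz1).
have vB_v := edge_at_face at1_v e1B; have vC_v := edge_at_face at1_v e1C.
have [g [vG_v nGB nGC]] := third_face vB_v vC_v nBC.
have ne0'' : E x0 != E w1 by rewrite -Ew1.
have ne1'' : E x1 != E w1 by rewrite -Ew1.
have nBG : Fc pB != Fc g by rewrite eq_sym.
have nCG : Fc pC != Fc g by rewrite eq_sym.
have dG : edge_on_face (E x0) (Fc g).
  apply: (other_is nBC nCG nBG vB_v vC_v vG_v at_d_v on0).
  exact: (not_on_uniq nBC on0 e1B e1C ne0'').
have nCB : Fc pC != Fc pB by rewrite eq_sym.
have d'G : edge_on_face (E x1) (Fc g).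
  apply: (other_is nCB nBG nCG vC_v vB_v vG_v at_d'_v on1).
  exact: (not_on_uniq nCB on1 e1C e1B ne1'').
have nGA : Fc g != Fc pA.
  apply/eqP => Eg; apply: (hH2 i4 x1); first by rewrite EA -Eg.
  by rewrite E0 EC.
have nGD : Fc g != Fc pD.
  apply/eqP => Eg; apply: (hH2 i x0); first by rewrite EB.
  by rewrite ED -Eg.
have nGE : Fc g != Fc pE.
  apply/eqP => Eg; apply: (hH2 i3 x0); first by rewrite EE -Eg.
  by rewrite E0 EB.
have nAG : Fc pA != Fc g by rewrite eq_sym.
have vA_u := edge_at_face at0_u e0A; have vB_u := edge_at_face at0_u e0B.
have vG_u := edge_at_face at_d_u dG.
have [yf [at_f_u fA fG]] := adj_at nAG vA_u vG_u.
have vC_w := edge_at_face at2_w e2C; have vD_w := edge_at_face at2_w e2D.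
have vG_w := edge_at_face at_d'_w d'G.
have [yg [at_g_w gG gD]] := adj_at nGD vG_w vD_w.
have [t1 [t2 [yh [[v1A v1G v1E] [v2G v2D v2E] [hG hE]]]]] : exists t1 t2 yh,
  [/\ [/\ vertex_on_face s t1 (Fc pA), vertex_on_face s t1 (Fc g) & vertex_on_face s t1 (Fc pE)],
      [/\ vertex_on_face s t2 (Fc g), vertex_on_face s t2 (Fc pD) & vertex_on_face s t2 (Fc pE)] &
      edge_on_face (E yh) (Fc g) /\ edge_on_face (E yh) (Fc pE)].
  have [t /= Ht] := no4 nAG nAD nAE nGD nGE nDE e4E e4A fA fG gG gD e3D e3E.
  case/or4P: Ht => /and3P [h1 h2 h3].
  - by exfalso; apply: (hpair i2 i4 t) => //; rewrite ?ED ?EA.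
  - have [yh [_ hG hE]] := adj_at nGE h1 h3.
    have nAE' := nAE.
    have [t1 /and3P [k1 k2 k3]] := no3 nAG nGE nAE e4E e4A fA fG hG hE.
    by exists t1, t, yh.
  - by exfalso; apply: (hnotri i2 i3 i4 t) => //; rewrite ?ED ?EE ?EA.
  have [yh [_ hG hE]] := adj_at nGE h3 h1.
  have [t2 /and3P [k1 k2 k3]] := no3 nGD nDE nGE hE hG gG gD e3D e3E.
  by exists t, t2, yh.
have uat : forall t p q y, Fc p != Fc q -> vertex_on_face s t (Fc p) -> vertex_on_face s t (Fc q) ->
    edge_on_face (E y) (Fc p) -> edge_on_face (E y) (Fc q) -> at_ (E y) t.
  move=> t p q y npq vp vq hp hq.
  have [y' [ay' hp' hq']] := adj_at npq vp vq.
  by rewrite (edge_unique npq hp hq hp' hq').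
have nEA : Fc pE != Fc pA by rewrite eq_sym.
have nEG : Fc pE != Fc g by rewrite eq_sym.
have nDG : Fc pD != Fc g by rewrite eq_sym.
have nBA : Fc pB != Fc pA by rewrite eq_sym.
have at_h_t1 := uat _ _ _ _ nGE v1G v1E hG hE.
have at_h_t2 := uat _ _ _ _ nGE v2G v2E hG hE.
have at_f_t1 := uat _ _ _ _ nAG v1A v1G fA fG.
have at_g_t2 := uat _ _ _ _ nGD v2G v2D gG gD.
have at4_t1 := uat _ _ _ _ nEA v1E v1A e4E e4A.
have at3_t2 := uat _ _ _ _ nDE v2D v2E e3D e3E.
have du_v : ~~ fconnect s x0 z.
  apply: (dist_vertex vA_u); apply: (not_von nBC nCG nBG vB_v vC_v vG_v) => //.
have du_t1 : ~~ fconnect s x0 t1.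
  apply: (dist_vertex vB_u); apply: (not_von nAG nGE nAE v1A v1G v1E) => //; by rewrite eq_sym.
have dv_w : ~~ fconnect s z (a x1).
  apply: (dist_vertex vB_v); apply: (not_von nCD nDG nCG vC_w vD_w vG_w) => //.
have dw_t2 : ~~ fconnect s (a x1) t2.
  apply: (dist_vertex vC_w); apply: (not_von nGD nDE nGE v2G v2D v2E) => //.
have dt1_t2 : ~~ fconnect s t1 t2.
  apply: (dist_vertex v1A); apply: (not_von nGD nDE nGE v2G v2D v2E) => //; by rewrite eq_sym.
pose Win x := [|| fconnect s x0 x, fconnect s z x, fconnect s (a x1) x, fconnect s t1 x | fconnect s t2 x].
have Wstep : forall y, y \in Fc g -> Win y -> Win (ph y).
  move=> y yGG; rewrite /Win; case/orP => [Hy|/orP [Hy|/orP [Hy|/orP [Hy|Hy]]]].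
  - case/orP: (step nBA nAG nBG vB_u vA_u vG_u on0 dG fA fG at_d_v at_f_t1 du_v du_t1 yGG Hy) => ->;
      by rewrite ?orbT.
  - have dvu : ~~ fconnect s z x0 by rewrite fcs_sym.
    case/orP: (step nBC nCG nBG vB_v vC_v vG_v on0 dG on1 d'G at_d_u at_d'_w dvu dv_w yGG Hy) => ->;
      by rewrite ?orbT.
  - have dwv : ~~ fconnect s (a x1) z by rewrite fcs_sym.
    case/orP: (step nCD nDG nCG vC_w vD_w vG_w on1 d'G gD gG at_d'_v at_g_t2 dwv dw_t2 yGG Hy) => ->;
      by rewrite ?orbT.
  - have dt1u : ~~ fconnect s t1 x0 by rewrite fcs_sym.
    case/orP: (step nAE nEG nAG v1A v1E v1G fA fG hE hG at_f_u at_h_t2 dt1u dt1_t2 yGG Hy) => ->;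
      by rewrite ?orbT.
  have dt2w : ~~ fconnect s t2 (a x1) by rewrite fcs_sym.
  have dt2t1 : ~~ fconnect s t2 t1 by rewrite fcs_sym.
  case/orP: (step nDE nEG nDG v2D v2E v2G gD gG hE hG at_g_w at_h_t1 dt2w dt2t1 yGG Hy) => ->;
    by rewrite ?orbT.
have WG : forall x, x \in Fc g -> Win x.
  have [g0 g0G zg0] := von_dart vG_v.
  have Eg0 : Fc g0 = Fc g by apply/esym/eqP; rewrite -inFc.
  move=> x; rewrite -Eg0 inE => Hx.
  have : (x \in Fc g) && Win x.
    apply: (fconnect_closed (P := fun y => (y \in Fc g) && Win y)) Hx.
      by rewrite g0G /Win zg0 orbT.
    move=> y /andP [yGG Wy]; rewrite Wstep // andbT.
    by rewrite inFc Fc_ph -inFc.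
  by case/andP.
have Wcl : forall x y, Win x -> fconnect s x y -> Win y.
  move=> x y; rewrite /Win => Wx Hxy.
  by case/orP: Wx => [Hy|/orP [Hy|/orP [Hy|/orP [Hy|Hy]]]];
    rewrite (connect_trans Hy Hxy) ?orbT.
have d10 : i1 != i by rewrite eq_sym.
have d20 : i2 != i by rewrite eq_sym.
have d30 : i3 != i by rewrite eq_sym.
have d40 : i4 != i by rewrite eq_sym.
have d21 : i2 != i1 by rewrite eq_sym.
have d31 : i3 != i1 by rewrite eq_sym.
have d41 : i4 != i1 by rewrite eq_sym.
have d32 : i3 != i2 by rewrite eq_sym.
have d42 : i4 != i2 by rewrite eq_sym.
have d43 : i4 != i3 by rewrite eq_sym.
have a0 : at_ (e i) x0 by rewrite Ew0.
have a1 : at_ (e i1) z by rewrite Ew1.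
have a2 : at_ (e i2) (a x1) by rewrite Ew2.
have a3 : at_ (e i3) t2 by rewrite Ew3.
have a4 : at_ (e i4) t1 by rewrite Ew4.
have carr : forall j x, Win x -> at_ (e j) x ->
    [|| (j == i) && fconnect s x0 x, (j == i1) && fconnect s z x,
        (j == i2) && fconnect s (a x1) x, (j == i4) && fconnect s t1 x |
        (j == i3) && fconnect s t2 x].
  move=> j x; rewrite /Win => Wx ax.
  case/orP: Wx => [Hy|/orP [Hy|/orP [Hy|/orP [Hy|Hy]]]]; rewrite -(at_conn _ Hy) in ax.
  - by rewrite (C1 ax a0) eqxx Hy.
  - by rewrite (C1 ax a1) eqxx Hy orbT.
  - by rewrite (C1 ax a2) eqxx Hy !orbT.
  - by rewrite (C1 ax a4) eqxx Hy !orbT.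
  by rewrite (C1 ax a3) eqxx Hy !orbT.
have NE := (negbTE d01, negbTE d02, negbTE d03, negbTE d04, negbTE d12, negbTE d13, negbTE d14,
   negbTE d23, negbTE d24, negbTE d34).
have NE' := (negbTE d10, negbTE d20, negbTE d30, negbTE d40, negbTE d21, negbTE d31, negbTE d41,
   negbTE d32, negbTE d42, negbTE d43).
exists (Fc g); split.
- by exists g.
- apply/eqP; rewrite eqn_leq (rah_face5 H g) andbT.
  have inj : {in Fc g &, injective V}.
    move=> x y xG yG /V_eqP Hxy.
    apply: (rah_face_simple H); last by rewrite inE.
    by move: xG yG; rewrite inFc [y \in _]inFc [y \in _]inFc => /eqP <- /eqP <-.
  rewrite -(card_in_imset inj).
  apply: (leq_trans (subset_leq_card (B := mem [:: V x0; V z; V (a x1); V t1; V t2]) _)).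
    apply/subsetP => _ /imsetP [x xG ->]; have := WG _ xG; rewrite /Win.
    by case/orP => [Hy|/orP [Hy|/orP [Hy|/orP [Hy|Hy]]]]; rewrite -(V_conn Hy) !inE eqxx ?orbT.
  exact: card_size.
move=> j.
case/or4P: (o5_all i j) => [/eqP ->|/eqP ->|/eqP ->|/orP [/eqP ->|/eqP ->]].
- apply: (count1 a0 vG_u WG Wcl) => x Wx ax.
  by have := carr _ _ Wx ax; rewrite eqxx ?NE ?NE' /= ?orbF.
- apply: (count1 a1 vG_v WG Wcl) => x Wx ax.
  by have := carr _ _ Wx ax; rewrite eqxx ?NE ?NE' /= ?orbF.
- apply: (count1 a2 vG_w WG Wcl) => x Wx ax.
  by have := carr _ _ Wx ax; rewrite eqxx ?NE ?NE' /= ?orbF.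
- apply: (count1 a3 v2G WG Wcl) => x Wx ax.
  by have := carr _ _ Wx ax; rewrite eqxx ?NE ?NE' /= ?orbF.
apply: (count1 a4 v1G WG Wcl) => x Wx ax.
by have := carr _ _ Wx ax; rewrite eqxx ?NE ?NE' /= ?orbF.
Qed.
End CaseA.

End Poly.

Theorem mainTheorem15 (D : finType) (a s : D -> D) (e F : 'I_5 -> {set D}) :
  rah_polyhedron a s ->
  prismatic a s e F ->
  ~ trivial_circuit a s e ->
  ~ (exists (i : 'I_5) (d d' : {set D}),
       [/\ flat a s e F i d, flat a s e F (ordS i) d' & same_side a s e d d']).
Proof.
move=> H [circ prism] ntriv [i [d [d' [fl fl' [p [q [Hp Hq Hc]]]]]]].
have [tau [T1 T2 T3]] := side_fun H circ prism.
have Ts : forall x y, fconnect s x y -> tau x = tau y.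
  by apply: connect_inv => u v /eqP <-; rewrite T1.
have Toff : tau p = tau q.
  apply: (connect_inv _ Hc) => u v /orP [/eqP -> | /andP [/eqP -> /forallP Hu]].
    by rewrite T1.
  by rewrite T2.
have notin : forall (j : 'I_5) x y, fconnect s x y -> y \in e j -> edge_of a x != e j ->
    forall k, x \notin e k.
  move=> j x y Hxy Hy Hne k; apply/negP => Hx.
  have exy := prism _ _ _ _ Hx Hy Hxy; subst y.
  case: circ => He _ _ _ _; have [w Ew] := He j.
  by move: Hne; rewrite Ew (E_eq H (x := w) (y := x)) ?eqxx // -Ew.
case: fl => _ on0 ne0 ne0' [x0 [y0 [z [Ed Hy0 Hz Hxy0 Hxz]]]].
case: fl' => _ on1 ne1 ne1' [x1 [y1 [z1 [Ed' Hy1 Hz1 Hxy1 Hxz1]]]].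
subst d d'.
have nx0 := notin _ _ _ Hxy0 Hy0 ne0.
have nx1 := notin _ _ _ Hxy1 Hy1 ne1.
have tp : tau p = tau z.
  rewrite -(Ts _ _ Hxz); move: Hp; rewrite !inE => /orP [] /eqP -> //.
  by rewrite T2.
have tq : tau q = tau y1.
  rewrite -(Ts _ _ Hxy1); move: Hq; rewrite !inE => /orP [] /eqP -> //.
  by rewrite (T2 _ nx1).
have ezy : z = y1.
  case: circ => He _ _ _ _; have [w Ew] := He (ordS i).
  have tzy : tau z = tau y1 by rewrite -tp Toff tq.
  have nt := T3 _ _ Hz.
  move: Hz Hy1 tzy nt; rewrite Ew !inE.
  case/orP => /eqP -> /orP [] /eqP -> // => ->; rewrite ?(aK H) eqxx //.
subst y1.
apply: ntriv.
exact: (caseA H circ prism on0 ne0 ne0' Hy0 Hz Hxy0 Hxz on1 ne1 ne1' Hxy1 Hz1 Hxz1).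
Qed.
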